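(* For every normal PO-dilator $W$ and every partial order $X$, the relation $\leq_{\mathcal T W(X)}$ is a partial order on $\mathcal T W(X)$.
   Context: A quasi embedding between partial orders $X,Y$ is a function $f$ with $f(x)\leq_Y f(y)\Rightarrow x\leq_X y$; an embedding also satisfies the converse. $\mathrm{PO}$ is the category of partial orders and quasi embeddings. $[X]^{<\omega}$ denotes the finite subsets of $X$, with $[f]^{<\omega}(a)=\{f(x)\mid x\in a\}$; subsets of partial orders are regarded as suborders and $\iota_a$ denotes an inclusion map. A PO-dilator is a functor $W:\mathrm{PO}\to\mathrm{PO}$ mapping embeddings to embeddings, with a natural transformation $\operatorname{supp}^W:W\Rightarrow[\cdot]^{<\omega}$ such that for every embedding $f:X\to Y$, $\operatorname{rng}(W(f))=\{\sigma\in W(Y)\mid\operatorname{supp}^W_Y(\sigma)\subseteq\operatorname{rng}(f)\}$. For finite $a,b\subseteq X$, $a\leq^{\mathrm{fin}}_X b$ iff every $x\in a$ has some $y\in b$ with $x\leq_X y$. $W$ is normal if $\sigma\leq_{W(X)}\tau$ implies $\operatorname{supp}^W_X(\sigma)\leq^{\mathrm{fin}}_X\operatorname{supp}^W_X(\tau)$. For a normal PO-dilator $W$ and partial order $X$, the set $\mathcal T W(X)$ and relation $\leq_{\mathcal T W(X)}$ are defined by simultaneous recursion. Terms: (i) $\overline x$ for each $x\in X$; (ii) for each finite $a\subseteq\mathcal T W(X)$ on which the restriction of $\leq_{\mathcal T W(X)}$ is a partial order, and each $\sigma\in W(a)$ with $\operatorname{supp}^W_a(\sigma)=a$, a term $\circ(a,\sigma)$.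 Relation: $s\leq_{\mathcal T W(X)}t$ iff (i') $s=\overline x$, $t=\overline y$, $x\leq_X y$; or (ii') $t=\circ(b,\tau)$ and $s\leq_{\mathcal T W(X)}t'$ for some $t'\in b$; or (iii') $s=\circ(a,\sigma)$, $t=\circ(b,\tau)$, the restriction of $\leq_{\mathcal T W(X)}$ to $a\cup b$ is a partial order, and $W(\iota_a)(\sigma)\leq_{W(a\cup b)}W(\iota_b)(\tau)$ for the inclusions $\iota_a:a\hookrightarrow a\cup b$, $\iota_b:b\hookrightarrow a\cup b$. (The recursion is along the length $l(\overline x)=0$, $l(\circ(a,\sigma))=1+\sum_{r\in a}2\,l(r)$.) *)

(* Defs.v *)
From Stdlib Require Import List.

Set Implicit Arguments.

Definition is_po (T : Type) (r : T -> T -> Prop) : Prop :=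
  (forall x, r x x) /\
  (forall x y, r x y -> r y x -> x = y) /\
  (forall x y z, r x y -> r y z -> r x z).

Record PO := mkPO {
  car :> Type;
  le : car -> car -> Prop;
  le_po : is_po le
}.
Arguments le {p} _ _.

Definition quasi_emb (X Y : PO) (f : X -> Y) : Prop :=
  forall x y, le (f x) (f y) -> le x y.
Definition emb (X Y : PO) (f : X -> Y) : Prop :=
  forall x y, le (f x) (f y) <-> le x y.
Arguments quasi_emb {X Y} f.
Arguments emb {X Y} f.

Definition finite_set (T : Type) (a : T -> Prop) : Prop :=
  exists s : list T, forall x, a x -> In x s.

Definition fin_le {X : PO} (a b : X -> Prop) : Prop :=
  forall x, a x -> exists y, b y /\ le x y.

(* A functor PO -> PO (category of partial orders and quasi embeddings; morphisms
   are functions, so W(f) depends only on f extensionally), preserving embeddings,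
   with a natural transformation supp : W => [.]^{<omega} satisfying the support
   condition. *)
Unset Implicit Arguments.
Record dilator := {
  Wobj : PO -> PO;
  Wmap : forall (X Y : PO) (f : X -> Y), quasi_emb f -> Wobj X -> Wobj Y;
  Wmap_ext : forall (X Y : PO) (f g : X -> Y) (hf : quasi_emb f) (hg : quasi_emb g),
      (forall x, f x = g x) -> forall s, Wmap X Y f hf s = Wmap X Y g hg s;
  Wmap_id : forall (X : PO) (h : quasi_emb (fun x : X => x)) s, Wmap X X (fun x => x) h s = s;
  Wmap_comp : forall (X Y Z : PO) (f : X -> Y) (g : Y -> Z)
      (hf : quasi_emb f) (hg : quasi_emb g) (hgf : quasi_emb (fun x => g (f x))) s,
      Wmap X Z (fun x => g (f x)) hgf s = Wmap Y Z g hg (Wmap X Y f hf s);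
  Wmap_emb : forall (X Y : PO) (f : X -> Y) (hf : quasi_emb f),
      emb f -> emb (Wmap X Y f hf);
  supp : forall X : PO, Wobj X -> X -> Prop;
  supp_fin : forall (X : PO) (s : Wobj X), finite_set (supp X s);
  supp_nat : forall (X Y : PO) (f : X -> Y) (hf : quasi_emb f) (s : Wobj X) (y : Y),
      supp Y (Wmap X Y f hf s) y <-> exists x, supp X s x /\ f x = y;
  supp_rng : forall (X Y : PO) (f : X -> Y) (hf : quasi_emb f), emb f ->
      forall t : Wobj Y,
        (exists s, Wmap X Y f hf s = t) <-> (forall y, supp Y t y -> exists x, f x = y)
}.
Set Implicit Arguments.
Arguments Wmap d {X Y} f _ _.
Arguments supp d {X} _ _.

Definition normal (W : dilator) : Prop :=
  forall (X : PO) (s t : Wobj W X), le s t -> fin_le (supp W s) (supp W t).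

Definition restr (T : Type) (r : T -> T -> Prop) (a : T -> Prop) :
  {t | a t} -> {t | a t} -> Prop :=
  fun u v => r (proj1_sig u) (proj1_sig v).

Definition subPO (T : Type) (r : T -> T -> Prop) (a : T -> Prop)
  (H : is_po (restr r a)) : PO := mkPO H.

Definition setU (T : Type) (a b : T -> Prop) : T -> Prop := fun t => a t \/ b t.

Definition incl_l (T : Type) (a b : T -> Prop) (u : {t | a t}) : {t | setU a b t} :=
  exist _ (proj1_sig u) (or_introl (proj2_sig u)).
Definition incl_r (T : Type) (a b : T -> Prop) (u : {t | b t}) : {t | setU a b t} :=
  exist _ (proj1_sig u) (or_intror (proj2_sig u)).

Lemma incl_l_qe (T : Type) (r : T -> T -> Prop) (a b : T -> Prop)
  (Ha : is_po (restr r a)) (Hab : is_po (restr r (setU a b))) :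
  quasi_emb (X := subPO Ha) (Y := subPO Hab) (@incl_l T a b).
Proof. intros x y h; exact h. Qed.

Lemma incl_r_qe (T : Type) (r : T -> T -> Prop) (a b : T -> Prop)
  (Hb : is_po (restr r b)) (Hab : is_po (restr r (setU a b))) :
  quasi_emb (X := subPO Hb) (Y := subPO Hab) (@incl_r T a b).
Proof. intros x y h; exact h. Qed.

(* Data of a term o(a, sigma): a finite set a of terms on which the relation r
   restricts to a partial order, and sigma in W(a) with supp_a(sigma) = a. *)
Record node_data (W : dilator) (T : Type) (r : T -> T -> Prop) := {
  nd_set : T -> Prop;
  nd_fin : finite_set nd_set;
  nd_po : is_po (restr r nd_set);
  nd_el : Wobj W (subPO nd_po);
  nd_supp : forall u, supp W nd_el u
}.
Arguments nd_set {W T r} _ _.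
Arguments nd_po {W T r} _.
Arguments nd_el {W T r} _.

(* A set tw with relation twle realising the simultaneous recursive definition of
   TW(X) and <=_{TW(X)}: tw is freely generated by the constructors
   tvar (terms x-bar) and tnode (terms o(a,sigma)), and twle satisfies exactly the
   clauses (i'), (ii'), (iii'). *)
Record TW_struct (W : dilator) (X : PO) := {
  tw : Type;
  twle : tw -> tw -> Prop;
  tvar : X -> tw;
  tnode : node_data W twle -> tw;
  tvar_inj : forall x y, tvar x = tvar y -> x = y;
  tnode_inj : forall d e, tnode d = tnode e -> d = e;
  tvar_tnode : forall x d, tvar x <> tnode d;
  tw_ind : forall P : tw -> Prop,
      (forall x, P (tvar x)) ->
      (forall d, (forall t, nd_set d t -> P t) -> P (tnode d)) ->
      forall t, P t;
  twle_spec : forall s t, twle s t <->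
      ((exists x y, s = tvar x /\ t = tvar y /\ le x y) \/
       (exists e, t = tnode e /\ exists t', nd_set e t' /\ twle s t') \/
       (exists d e, s = tnode d /\ t = tnode e /\
          exists H : is_po (restr twle (setU (nd_set d) (nd_set e))),
            le (p := Wobj W (subPO H))
               (Wmap W _ (@incl_l_qe _ twle (nd_set d) (nd_set e) (nd_po d) H) (nd_el d))
               (Wmap W _ (@incl_r_qe _ twle (nd_set d) (nd_set e) (nd_po e) H) (nd_el e))))
}.

(* Main.v *)
Require Import Defs.
From Stdlib Require Import List PeanoNat Lia ProofIrrelevance FunctionalExtensionality PropExtensionality Classical.

Section TWS.
Variables (W : dilator) (HW : normal W) (X : PO) (TS : TW_struct W X).
Notation T := (tw TS).
Notation r := (twle TS).

Lemma sig_ext (P : T -> Prop) (u v : {t | P t}) : proj1_sig u = proj1_sig v -> u = v.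
Proof. destruct u, v; simpl; intros; subst; f_equal; apply proof_irrelevance. Qed.

Lemma po_sub (a b : T -> Prop) : is_po (restr r a) -> (forall t, b t -> a t) -> is_po (restr r b).
Proof.
 intros [Hr [Ha Ht]] h. unfold restr in *. split; [|split].
 - intros [x hx]; simpl. exact (Hr (exist _ x (h _ hx))).
 - intros [x hx] [y hy]; simpl; intros H1 H2. apply sig_ext; simpl.
   pose proof (Ha (exist _ x (h _ hx)) (exist _ y (h _ hy)) H1 H2) as E.
   exact (f_equal (@proj1_sig _ _) E).
 - intros [x hx] [y hy] [z hz]; simpl; intros H1 H2.
   exact (Ht (exist _ x (h _ hx)) (exist _ y (h _ hy)) (exist _ z (h _ hz)) H1 H2).
Qed.

Definition inc (a b : T -> Prop) (h : forall t, a t -> b t) (u : {t | a t}) : {t | b t} :=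
  exist _ (proj1_sig u) (h _ (proj2_sig u)).
Arguments inc {a b} h u.

Lemma inc_emb {a b : T -> Prop} (Ha : is_po (restr r a)) (Hb : is_po (restr r b)) (h : forall t, a t -> b t) :
  emb (X := subPO Ha) (Y := subPO Hb) (inc h).
Proof. intros x y. split; intro H; exact H. Qed.

Lemma inc_qe {a b : T -> Prop} (Ha : is_po (restr r a)) (Hb : is_po (restr r b)) (h : forall t, a t -> b t) :
  quasi_emb (X := subPO Ha) (Y := subPO Hb) (inc h).
Proof. intros x y H; exact H. Qed.

Lemma Wcomp {A B C : PO} (f : A -> B) (g : B -> C) (hf : quasi_emb f) (hg : quasi_emb g)
  (k : A -> C) (hk : quasi_emb k) s :
  (forall x, g (f x) = k x) -> Wmap W g hg (Wmap W f hf s) = Wmap W k hk s.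
Proof.
  intros E. assert (hgf : quasi_emb (fun x => g (f x))) by (intros x y H; apply hf, hg, H).
  rewrite <- (Wmap_comp W A B C f g hf hg hgf s). apply Wmap_ext; exact E.
Qed.

Lemma emb_inj (A B : PO) (f : A -> B) : emb f -> forall x y, f x = f y -> x = y.
Proof.
  intros Hf x y E. destruct (le_po A) as [_ [Ha _]]. destruct (le_po B) as [Hr _].
  apply Ha; apply Hf; rewrite E; apply Hr.
Qed.

Inductive Bnd : T -> nat -> Prop :=
| Bvar : forall x n, Bnd (tvar TS x) n
| Bnode : forall d n, (forall t, nd_set d t -> Bnd t n) -> Bnd (tnode TS d) (S n).

Lemma Bnd_mono t n : Bnd t n -> Bnd t (S n).
Proof. induction 1; constructor; auto. Qed.

Lemma Bnd_le t n m : n <= m -> Bnd t n -> Bnd t m.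
Proof. induction 1; auto using Bnd_mono. Qed.

Lemma Bnd_node_inv d m : Bnd (tnode TS d) m -> exists n, m = S n /\ forall u, nd_set d u -> Bnd u n.
Proof.
  intros H. remember (tnode TS d) as t eqn:E. destruct H.
  - exfalso; exact (tvar_tnode TS _ _ E).
  - apply tnode_inj in E. subst. eauto.
Qed.

Lemma Bnd_ex t : exists n, Bnd t n.
Proof.
  apply (tw_ind TS (fun t => exists n, Bnd t n)).
  - intros x; exists 0; constructor.
  - intros d IH. destruct (nd_fin d) as [l Hl].
    assert (exists N, forall u, In u l -> nd_set d u -> Bnd u N) as [N HN].
    { clear Hl. induction l as [|u l IHl].
      - exists 0; intros u [].
      - destruct IHl as [N HN]. destruct (classic (nd_set d u)) as [hu|hu].
        + destruct (IH u hu) as [n Hn]. exists (N + n). intros v [<-|Hv] hv.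
          * apply Bnd_le with n; [lia|auto].
          * apply Bnd_le with N; [lia|auto].
        + exists N; intros v [<-|Hv] hv; [contradiction|auto]. }
    exists (S N); constructor; intros u hu; apply HN; auto.
Qed.

Definition WLE (d e : node_data W r) (H : is_po (restr r (setU (nd_set d) (nd_set e)))) : Prop :=
  le (p := Wobj W (subPO H))
    (Wmap W _ (@incl_l_qe T r (nd_set d) (nd_set e) (nd_po d) H) (nd_el d))
    (Wmap W _ (@incl_r_qe T r (nd_set d) (nd_set e) (nd_po e) H) (nd_el e)).

Lemma le_var_inv s x : r s (tvar TS x) -> exists y, s = tvar TS y /\ le y x.
Proof.
  intros H. apply (twle_spec TS) in H.
  destruct H as [[y [x' [E1 [E2 Hl]]]] | [[e [E _]] | [d [e [_ [E _]]]]]].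
  - apply tvar_inj in E2; subst; eauto.
  - exfalso; exact (tvar_tnode TS _ _ E).
  - exfalso; exact (tvar_tnode TS _ _ E).
Qed.

Lemma le_node_inv s e : r s (tnode TS e) ->
  (exists t', nd_set e t' /\ r s t') \/
  (exists d, s = tnode TS d /\ exists H, WLE d e H).
Proof.
  intros H; apply (twle_spec TS) in H.
  destruct H as [[x [y [E1 [E2 Hl]]]] | [[e' [E [t' [Ht Hl]]]] | [d [e' [E1 [E2 HH]]]]]].
  - exfalso; exact (tvar_tnode TS _ _ (eq_sym E2)).
  - apply tnode_inj in E; subst; left; eauto.
  - apply tnode_inj in E2; subst; right; eauto.
Qed.

Lemma to_le_node s t e : nd_set e t -> r s t -> r s (tnode TS e).
Proof. intros. apply twle_spec; right; left; exists e; split; [reflexivity| exists t; auto]. Qed.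

Lemma to_le_nn d e H : WLE d e H -> r (tnode TS d) (tnode TS e).
Proof. intros. apply twle_spec; right; right; exists d, e; split; [|split]; try reflexivity; exists H; exact H0. Qed.

Lemma refl_tw t : r t t.
Proof.
  apply (tw_ind TS (fun t => r t t)).
  - intros x; apply twle_spec; left; exists x, x; repeat split; apply (proj1 (le_po X)).
  - intros d _.
    assert (H : is_po (restr r (setU (nd_set d) (nd_set d)))).
    { apply po_sub with (nd_set d); [apply nd_po | intros t0 [h|h]; exact h]. }
    apply (to_le_nn d d H). unfold WLE.
    match goal with |- le ?A ?B => replace A with B end.
    + apply (proj1 (le_po _)).
    + apply Wmap_ext; intros; apply sig_ext; reflexivity.
Qed.

Lemma norm_cons d e H : WLE d e H -> forall t, nd_set d t -> exists t', nd_set e t' /\ r t t'.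
Proof.
  intros Hle t ht. pose proof (HW _ _ _ Hle) as F.
  destruct (F (incl_l (nd_set d) (nd_set e) (exist _ t ht))) as [y [Hy Hl]].
  - apply supp_nat. exists (exist _ t ht). split; [apply nd_supp | reflexivity].
  - apply supp_nat in Hy. destruct Hy as [v [_ <-]].
    exists (proj1_sig v). split; [exact (proj2_sig v) | exact Hl].
Qed.

Lemma Mlem s t : r s t -> forall n, Bnd t n -> Bnd s n.
Proof.
  revert t.
  apply (tw_ind TS (fun s => forall t, r s t -> forall n, Bnd t n -> Bnd s n)).
  - intros x t _ n _; constructor.
  - intros d IHs t.
    apply (tw_ind TS (fun t => r (tnode TS d) t -> forall n, Bnd t n -> Bnd (tnode TS d) n)).
    + intros y H. apply le_var_inv in H as [y' [E _]]. exfalso; exact (tvar_tnode TS _ _ (eq_sym E)).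
    + intros e IHt H n Hn. apply Bnd_node_inv in Hn as [m [-> Hm]].
      apply le_node_inv in H as [[t' [Ht Hl]] | [d' [E [H HH]]]].
      * apply Bnd_mono. apply IHt with t'; auto.
      * apply tnode_inj in E; subst d'. constructor. intros u hu.
        destruct (norm_cons d e H HH u hu) as [u' [Hu' Hl]].
        apply (IHs u hu u' Hl). auto.
Qed.

Lemma desc d t' : nd_set d t' -> (forall n, Bnd t' n -> Bnd (tnode TS d) n) -> False.
Proof.
  intros ht H. destruct (Bnd_ex t') as [n Hn]. revert Hn. induction n; intros Hn.
  - apply H in Hn. apply Bnd_node_inv in Hn. destruct Hn as [m [E _]]; discriminate.
  - apply H in Hn. apply Bnd_node_inv in Hn as [m [E Hm]]. injection E as ->. apply IHn, Hm, ht.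
Qed.


Lemma swap_le d e H H' : WLE e d H' ->
  le (p := Wobj W (subPO H))
    (Wmap W _ (@incl_r_qe T r (nd_set d) (nd_set e) (nd_po e) H) (nd_el e))
    (Wmap W _ (@incl_l_qe T r (nd_set d) (nd_set e) (nd_po d) H) (nd_el d)).
Proof.
  intros HH.
  assert (h : forall t, setU (nd_set d) (nd_set e) t -> setU (nd_set e) (nd_set d) t)
    by (intros t [x|x]; [right|left]; exact x).
  apply (proj1 (Wmap_emb W (subPO H) (subPO H') (inc h) (inc_qe H H' h) (inc_emb H H' h) _ _)).
  rewrite (@Wcomp (subPO (nd_po e)) (subPO H) (subPO H') _ (inc h) _ (inc_qe H H' h) (incl_l (nd_set e) (nd_set d))
             (@incl_l_qe T r (nd_set e) (nd_set d) (nd_po e) H') (nd_el e))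
    by (intros; apply sig_ext; reflexivity).
  rewrite (@Wcomp (subPO (nd_po d)) (subPO H) (subPO H') _ (inc h) _ (inc_qe H H' h) (incl_r (nd_set e) (nd_set d))
             (@incl_r_qe T r (nd_set e) (nd_set d) (nd_po d) H') (nd_el d))
    by (intros; apply sig_ext; reflexivity).
  exact HH.
Qed.

Lemma node_eq d e H :
  Wmap W _ (@incl_l_qe T r (nd_set d) (nd_set e) (nd_po d) H) (nd_el d) =
  Wmap W _ (@incl_r_qe T r (nd_set d) (nd_set e) (nd_po e) H) (nd_el e) -> d = e.
Proof.
  intros Eq.
  assert (Hde : forall t, nd_set d t -> nd_set e t).
  { intros t ht.
    assert (Hs : supp W (Wmap W _ (@incl_r_qe T r (nd_set d) (nd_set e) (nd_po e) H) (nd_el e))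
                   (incl_l (nd_set d) (nd_set e) (exist _ t ht))).
    { rewrite <- Eq. apply supp_nat. exists (exist _ t ht); split; [apply nd_supp|reflexivity]. }
    apply supp_nat in Hs. destruct Hs as [v [_ Ev]].
    apply (f_equal (@proj1_sig _ _)) in Ev. simpl in Ev. rewrite <- Ev. exact (proj2_sig v). }
  assert (Hed : forall t, nd_set e t -> nd_set d t).
  { intros t ht.
    assert (Hs : supp W (Wmap W _ (@incl_l_qe T r (nd_set d) (nd_set e) (nd_po d) H) (nd_el d))
                   (incl_r (nd_set d) (nd_set e) (exist _ t ht))).
    { rewrite Eq. apply supp_nat. exists (exist _ t ht); split; [apply nd_supp|reflexivity]. }
    apply supp_nat in Hs. destruct Hs as [v [_ Ev]].
    apply (f_equal (@proj1_sig _ _)) in Ev. simpl in Ev. rewrite <- Ev. exact (proj2_sig v). }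
  destruct d as [a fa pa sg sa], e as [b fb pb tau sb]; simpl in *.
  assert (a = b) by (extensionality t; apply propositional_extensionality; split; auto).
  subst b. assert (fa = fb) by apply proof_irrelevance. subst fb.
  assert (pa = pb) by apply proof_irrelevance. subst pb.
  assert (sg = tau).
  { rewrite (Wmap_ext W (subPO pa) (subPO H) (incl_r a a) (incl_l a a) _ (@incl_l_qe T r a a pa H)) in Eq
      by (intros; apply sig_ext; reflexivity).
    exact (emb_inj _ _ _ (Wmap_emb W (subPO pa) (subPO H) _ _ (inc_emb pa H (fun t x => or_introl x))) _ _ Eq). }
  subst tau. assert (sa = sb) by apply proof_irrelevance. subst sb. reflexivity.
Qed.

Lemma antisym_tw s t : r s t -> r t s -> s = t.
Proof.
  intros H1 H2.
  apply (twle_spec TS) in H1 as H1'.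
  destruct H1' as [[x [y [E1 [E2 Hl]]]] | [[e [E [t' [Ht Hl]]]] | [d [e [E1 [E2 [H HW1]]]]]]].
  - subst. apply le_var_inv in H2 as [x' [E Hl']]. apply tvar_inj in E; subst.
    f_equal. exact (proj1 (proj2 (le_po X)) _ _ Hl Hl').
  - subst t. exfalso. apply (desc e t' Ht). intros n Hn.
    apply (Mlem _ _ H2). apply (Mlem _ _ Hl). exact Hn.
  - subst s t. apply le_node_inv in H2 as [[t' [Ht Hl]] | [d' [E [H' HW2]]]].
    + exfalso. apply (desc d t' Ht). intros n Hn. apply (Mlem _ _ H1), (Mlem _ _ Hl), Hn.
    + apply tnode_inj in E; subst d'. f_equal. apply (node_eq d e H).
      exact (proj1 (proj2 (le_po _)) _ _ HW1 (swap_le d e H H' HW2)).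
Qed.


Definition Tn n := forall a b c, Bnd a n -> Bnd b n -> Bnd c n -> r a b -> r b c -> r a c.

Lemma po_of (U : T -> Prop) m : (forall t, U t -> Bnd t m) -> Tn m -> is_po (restr r U).
Proof.
  intros HB HT. unfold restr. split; [|split].
  - intros [x hx]; apply refl_tw.
  - intros [x hx] [y hy] h1 h2; apply sig_ext; simpl in *; apply antisym_tw; auto.
  - intros [x hx] [y hy] [z hz] h1 h2; simpl in *; apply (HT x y z); auto.
Qed.

Lemma step n : (forall m, n = S m -> Tn m) -> Tn n.
Proof.
  intros IHn.
  assert (K : forall c, Bnd c n -> forall a b, Bnd a n -> Bnd b n -> r a b -> r b c -> r a c).
  2:{ intros a b c Ha Hb Hc; eapply K; eauto. }
  apply (tw_ind TS (fun c => Bnd c n -> forall a b, Bnd a n -> Bnd b n -> r a b -> r b c -> r a c)).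
  - intros z _ a b Ha Hb Hab Hbc.
    apply le_var_inv in Hbc as [y [-> Hyz]]. apply le_var_inv in Hab as [x [-> Hxy]].
    apply twle_spec; left; exists x, z; repeat split.
    exact (proj2 (proj2 (le_po X)) _ _ _ Hxy Hyz).
  - intros e IHe Hc a b Ha Hb Hab Hbc.
    apply Bnd_node_inv in Hc as HcI. destruct HcI as [m [En Hem]].
    apply le_node_inv in Hbc as [[t' [Ht' Hbt']] | [d [Eb [H2 HW2]]]].
    + apply (to_le_node a t' e Ht'). apply (IHe t' Ht') with b; auto.
      subst n; apply Bnd_mono, Hem, Ht'.
    + subst b. apply Bnd_node_inv in Hb as HbI. destruct HbI as [m' [En' Hdm]].
      rewrite En in En'. injection En' as <-.
      apply le_node_inv in Hab as [[s' [Hs' Has']] | [c0 [Ea [H1 HW1]]]].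
      * destruct (norm_cons d e H2 HW2 s' Hs') as [s'' [Hs'' Hss]].
        apply (to_le_node a s'' e Hs''). apply (IHe s'' Hs'') with s'; auto.
        -- subst n; apply Bnd_mono, Hem, Hs''.
        -- subst n; apply Bnd_mono, Hdm, Hs'.
      * subst a. apply Bnd_node_inv in Ha as HaI. destruct HaI as [m'' [En'' Hcm]].
        rewrite En in En''. injection En'' as <-.
        pose proof (IHn m En) as Tm.
        set (U := fun t => nd_set c0 t \/ nd_set d t \/ nd_set e t).
        assert (HU : is_po (restr r U)).
        { apply (po_of U m); auto. intros t [h|[h|h]]; auto. }
        assert (hCU : forall t, setU (nd_set c0) (nd_set e) t -> U t)
          by (intros t [h|h]; unfold U; tauto).
        assert (h1U : forall t, setU (nd_set c0) (nd_set d) t -> U t)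
          by (intros t [h|h]; unfold U; tauto).
        assert (h2U : forall t, setU (nd_set d) (nd_set e) t -> U t)
          by (intros t [h|h]; unfold U; tauto).
        assert (hc : forall t, nd_set c0 t -> U t) by (intros t h; unfold U; tauto).
        assert (hd : forall t, nd_set d t -> U t) by (intros t h; unfold U; tauto).
        assert (he : forall t, nd_set e t -> U t) by (intros t h; unfold U; tauto).
        assert (H3 : is_po (restr r (setU (nd_set c0) (nd_set e)))) by (apply po_sub with U; auto).
        apply (to_le_nn c0 e H3). unfold WLE.
        apply (proj1 (Wmap_emb W (subPO H3) (subPO HU) (inc hCU) (inc_qe H3 HU hCU) (inc_emb H3 HU hCU) _ _)).
        rewrite (@Wcomp (subPO (nd_po c0)) (subPO H3) (subPO HU) _ (inc hCU) _ (inc_qe H3 HU hCU)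
                   (inc hc) (inc_qe (nd_po c0) HU hc) (nd_el c0))
          by (intros; apply sig_ext; reflexivity).
        rewrite (@Wcomp (subPO (nd_po e)) (subPO H3) (subPO HU) _ (inc hCU) _ (inc_qe H3 HU hCU)
                   (inc he) (inc_qe (nd_po e) HU he) (nd_el e))
          by (intros; apply sig_ext; reflexivity).
        apply (proj2 (proj2 (le_po _))) with (Wmap W (X := subPO (nd_po d)) (Y := subPO HU) (inc hd) (inc_qe (nd_po d) HU hd) (nd_el d)).
        -- rewrite <- (@Wcomp (subPO (nd_po c0)) (subPO H1) (subPO HU) _ (inc h1U)
                   (@incl_l_qe T r (nd_set c0) (nd_set d) (nd_po c0) H1) (inc_qe H1 HU h1U)
                   (inc hc) (inc_qe (nd_po c0) HU hc) (nd_el c0))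
             by (intros; apply sig_ext; reflexivity).
           rewrite <- (@Wcomp (subPO (nd_po d)) (subPO H1) (subPO HU) _ (inc h1U)
                   (@incl_r_qe T r (nd_set c0) (nd_set d) (nd_po d) H1) (inc_qe H1 HU h1U)
                   (inc hd) (inc_qe (nd_po d) HU hd) (nd_el d))
             by (intros; apply sig_ext; reflexivity).
           apply (proj2 (Wmap_emb W (subPO H1) (subPO HU) (inc h1U) (inc_qe H1 HU h1U) (inc_emb H1 HU h1U) _ _)).
           exact HW1.
        -- rewrite <- (@Wcomp (subPO (nd_po d)) (subPO H2) (subPO HU) _ (inc h2U)
                   (@incl_l_qe T r (nd_set d) (nd_set e) (nd_po d) H2) (inc_qe H2 HU h2U)
                   (inc hd) (inc_qe (nd_po d) HU hd) (nd_el d))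
             by (intros; apply sig_ext; reflexivity).
           rewrite <- (@Wcomp (subPO (nd_po e)) (subPO H2) (subPO HU) _ (inc h2U)
                   (@incl_r_qe T r (nd_set d) (nd_set e) (nd_po e) H2) (inc_qe H2 HU h2U)
                   (inc he) (inc_qe (nd_po e) HU he) (nd_el e))
             by (intros; apply sig_ext; reflexivity).
           apply (proj2 (Wmap_emb W (subPO H2) (subPO HU) (inc h2U) (inc_qe H2 HU h2U) (inc_emb H2 HU h2U) _ _)).
           exact HW2.
Qed.

Lemma Tall n : Tn n.
Proof.
  induction n; apply step; intros m E; [discriminate | injection E as <-; assumption].
Qed.

Lemma trans_tw a b c : r a b -> r b c -> r a c.
Proof.
  destruct (Bnd_ex a) as [na Ha], (Bnd_ex b) as [nb Hb], (Bnd_ex c) as [nc Hc].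
  apply (Tall (na + nb + nc)); [apply Bnd_le with na | apply Bnd_le with nb | apply Bnd_le with nc]; auto; lia.
Qed.

End TWS.

Theorem proposition2p6 (W : dilator) (HW : normal W) (X : PO) (S : TW_struct W X) :
  is_po (twle S).
Proof.
  split; [|split].
  - apply refl_tw.
  - intros; apply (antisym_tw W HW); auto.
  - intros; eapply (trans_tw W HW); eauto.
Qed.
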